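(* Let $\beta_1,\beta_2$ be complex numbers with $\mathrm{Re}(\beta_j)\ge\gamma\ge1$ for $j=1,2$. Let $\psi_j(z)=1/(z+\beta_j)$ for $\mathrm{Re}(z)\ge0$ and $\theta=\psi_1\circ\psi_2$. Then for all $z,w\in\mathbb C$ with $\mathrm{Re}(z)\ge0$ and $\mathrm{Re}(w)\ge0$, $$|\theta(z)-\theta(w)|\le(\gamma^2+1)^{-2}|z-w|.$$ *)

(* Defs.v *)
From HB Require Import structures.
From mathcomp Require Import all_boot all_order all_algebra.
From mathcomp Require Import complex.
From mathcomp Require Import reals.
Set Implicit Arguments. Unset Strict Implicit. Unset Printing Implicit Defensive.
Import Order.TTheory GRing.Theory Num.Theory.
Local Open Scope ring_scope.
Local Open Scope complex_scope.

Definition psi (R : rcfType) (beta : R[i]) (z : R[i]) : R[i] := (z + beta)^-1.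

Definition theta (R : rcfType) (b1 b2 : R[i]) (z : R[i]) : R[i] :=
  psi b1 (psi b2 z).

(* Main.v *)
Require Import Defs.
From HB Require Import structures.
From mathcomp Require Import all_boot all_order all_algebra.
From mathcomp Require Import complex.
From mathcomp Require Import reals.
From mathcomp Require Import ring lra.
Import Order.TTheory GRing.Theory Num.Theory.
Local Open Scope ring_scope.
Local Open Scope complex_scope.

Lemma key (R : realType) (x b y d g : R) : 1 <= g -> g <= x -> g <= y ->
  (g^+2 + 1)^+2 <= (1 + (x*y - b*d))^+2 + (x*d + b*y)^+2.
Proof.
move=> g1 gx gy.
have h0 : g^+2 <= x*y by rewrite expr2; apply: ler_pM => //; lra.
have h1 : (g^+2+1)^+2 <= (1+x*y)^+2.
  rewrite addrC !expr2; apply: ler_pM; nra.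
have h2 : 0 <= b^+2*d^+2 + x^+2*d^+2 + y^+2*b^+2 - 2*b*d.
  have [bd|bd] := lerP 0 (b*d).
    have h3 : 0 <= (x*y-1)*(b*d) by apply: mulr_ge0 => //; nra.
    have h4 : 0 <= (x*d - y*b)^+2 by apply: sqr_ge0.
    have h5 : 0 <= b^+2*d^+2 by rewrite -exprMn sqr_ge0.
    nra.
  have h4 : 0 <= (x*d)^+2 + (y*b)^+2 by rewrite addr_ge0 ?sqr_ge0.
  have h5 : 0 <= b^+2*d^+2 by rewrite -exprMn sqr_ge0.
  nra.
nra.
Qed.

Lemma normp (R : realType) (g : R) (a c : R[i]) : 1 <= g ->
  g <= complex.Re a -> g <= complex.Re c -> (g^+2+1)%:C <= `|1 + a*c|.
Proof.
case: a => x b; case: c => y d /= g1 gx gy.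
rewrite normc_def lecR /=.
have k : (g^+2+1)^+2 <= (1 + (x*y - b*d))^+2 + (x*d + b*y)^+2 by apply: key.
rewrite add0r; apply: le_trans (ler_wsqrtr k).
by rewrite sqrtr_sqr ger0_norm // addr_ge0 ?sqr_ge0.
Qed.
Theorem lemma7p1 (R : realType) (gamma : R) (b1 b2 : R[i])
  (hgamma : 1 <= gamma)
  (hb1 : gamma <= complex.Re b1) (hb2 : gamma <= complex.Re b2)
  (z w : R[i]) (hz : 0 <= complex.Re z) (hw : 0 <= complex.Re w) :
  `|theta b1 b2 z - theta b1 b2 w| <=
    ((gamma ^+ 2 + 1) ^- 2)%:C * `|z - w|.
Proof.
have ReD (u v : R[i]) : complex.Re (u + v) = complex.Re u + complex.Re v.
  by case: u => ? ?; case: v.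
have Rez : gamma <= complex.Re (z + b2) by rewrite ReD; lra.
have Rew : gamma <= complex.Re (w + b2) by rewrite ReD; lra.
have nz0 (c : R[i]) : gamma <= complex.Re c -> c != 0.
  by move=> h; apply/eqP => c0; move: h; rewrite c0 /=; lra.
have cz0 := nz0 _ Rez; have cw0 := nz0 _ Rew.
have kp : 0 < gamma ^+ 2 + 1 by apply: ltr_wpDl; [apply: sqr_ge0 | lra].
have kpC : 0 < (gamma ^+ 2 + 1)%:C by rewrite ltcR.
have np := @normp R _ _ _ hgamma hb1 Rez.
have nq := @normp R _ _ _ hgamma hb1 Rew.
have p0 : 1 + b1 * (z + b2) != 0.
  by rewrite -normr_gt0; exact: lt_le_trans kpC np.
have q0 : 1 + b1 * (w + b2) != 0.
  by rewrite -normr_gt0; exact: lt_le_trans kpC nq.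
have -> : theta b1 b2 z - theta b1 b2 w =
   (z - w) / ((1 + b1 * (z + b2)) * (1 + b1 * (w + b2))).
  rewrite /theta /psi.
  by field; rewrite ?cz0 ?cw0 ?p0 ?q0 //; rewrite addrC mulrC in p0 q0.
rewrite normrM normfV normrM mulrC.
apply: ler_wpM2r; first exact: normr_ge0.
rewrite rmorphV ?unitfE ?expf_neq0 ?gt_eqF //= rmorphXn /=.
rewrite lef_pV2 ?posrE ?mulr_gt0 ?exprn_gt0 ?(lt_le_trans kpC) //.
by rewrite expr2 ler_pM // ltW.
Qed.
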